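(* With $G$, $d$, $G_0$, $X$ and the topology $\tau$ as in the context, let $Y$ be any Polish space with a continuous action of $G$. Then there is a map $\pi:Y\to X$ that is continuous, one-to-one, satisfies $\pi(g\cdot y)=g\cdot\pi(y)$ for all $g\in G$, $y\in Y$, and is open onto its image: for every open $U\subseteq Y$ there is a $\tau$-open $O\subseteq X$ with $U=\{y\in Y:\pi(y)\in O\}$.
   Context: Let $G$ be a Polish group, $d$ a compatible right-invariant metric on $G$ (i.e. $d(g_0h,g_1h)=d(g_0,g_1)$) bounded by $1$, and $G_0$ a countable dense subgroup of $G$. Let $\mathcal L(G,d)$ be the set of functions $f:G\to[0,1]$ with $|f(g_1)-f(g_2)|\le d(g_1,g_2)$ for all $g_1,g_2$. Let $\mathbb Q^{<\mathbb N}$ be the set of finite sequences of rationals; for $s\in\mathbb Q^{<\mathbb N}$ and rationals $a_1,\dots,a_k$, $sa_1\dots a_k$ denotes the sequence $s$ followed by $a_1,\dots,a_k$ (natural numbers are regarded as rationals). Elements of $\mathcal L(G,d)^{\mathbb Q^{<\mathbb N}}$ are families $\vec f=(f_s)_{s\in\mathbb Q^{<\mathbb N}}$, and $G$ acts by $(g\cdot\vec f)_s(g_0)=f_s(g_0g)$. Let $X$ be the set of $\vec f\in\mathcal L(G,d)^{\mathbb Q^{<\mathbb N}}$ such that, writing $t=sq_0q_1q_2\,0\,m\,n$ and $u=sq_0q_1q_2\,1\,m\,n$: (1) for all $s\in\mathbb Q^{<\mathbb N}$, $g_0\in G_0$, $m,n\in\mathbb N$, $q_0,q_1,q_2,\epsilon\in\mathbb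 Q\cap(0,1)$ with $0<q_i\pm\epsilon<1$ ($i=0,1,2$): $f_t(g_0)<q_1-\epsilon$ or $f_s(g_0)\le q_0+\epsilon$; (2) for the same range of parameters: $f_u(g_0)\ge q_2+\epsilon$ or $f_t(g_0)\ge q_1-\epsilon$; (3) for all $s\in\mathbb Q^{<\mathbb N}$, $g_0\in G_0$, $q_0,\epsilon\in\mathbb Q\cap(0,1)$: if $f_s(g_0)<q_0$ then there are $q_1,q_2\in\mathbb Q$, $g_1\in G_0$, $m,n\in\mathbb N$ with $0<q_2<q_1<q_0<1$, $d(g_0,g_1)<\epsilon$, and $f_u(g_1)<q_2$ where $u=sq_0q_1q_2\,1\,m\,n$. The topology $\tau$ on $X$ is the one generated by the subbasis of all sets $\{\vec f\in X: f_s(g_0)<q_0\}$ for $s\in\mathbb Q^{<\mathbb N}$, $g_0\in G_0$, $q_0\in\mathbb Q$. A Polish space is a separable completely metrizable space; a continuous action means the action map $G\times Y\to Y$ is jointly continuous. *)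

(* Defs.v *)
From Stdlib Require Import Reals QArith Qcanon Qreals List.
Import ListNotations.
Open Scope R_scope.

Definition is_metric {T : Type} (e : T -> T -> R) : Prop :=
  (forall x y, 0 <= e x y) /\ (forall x, e x x = 0) /\
  (forall x y, e x y = 0 -> x = y) /\ (forall x y, e x y = e y x) /\
  (forall x y z, e x z <= e x y + e y z).

Definition metric_open {T : Type} (e : T -> T -> R) (U : T -> Prop) : Prop :=
  forall x, U x -> exists r, 0 < r /\ forall y, e x y < r -> U y.

Definition same_topology {T : Type} (e e' : T -> T -> R) : Prop :=
  forall U : T -> Prop, metric_open e U <-> metric_open e' U.

Definition countable_set {T : Type} (A : T -> Prop) : Prop :=
  exists f : nat -> option T, forall x, A x -> exists n, f n = Some x.

Definition dense_set {T : Type} (e : T -> T -> R) (A : T -> Prop) : Prop :=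
  forall x r, 0 < r -> exists a, A a /\ e x a < r.

Definition separable {T : Type} (e : T -> T -> R) : Prop :=
  exists A : T -> Prop, countable_set A /\ dense_set e A.

Definition cauchy_seq {T : Type} (e : T -> T -> R) (u : nat -> T) : Prop :=
  forall eps, 0 < eps -> exists N, forall m n, (N <= m)%nat -> (N <= n)%nat ->
    e (u m) (u n) < eps.

Definition converges_to {T : Type} (e : T -> T -> R) (u : nat -> T) (l : T) : Prop :=
  forall eps, 0 < eps -> exists N, forall n, (N <= n)%nat -> e (u n) l < eps.

Definition complete_metric {T : Type} (e : T -> T -> R) : Prop :=
  forall u, cauchy_seq e u -> exists l, converges_to e u l.

Definition polish_topology {T : Type} (e : T -> T -> R) : Prop :=
  is_metric e /\ separable e /\
  exists e' : T -> T -> R, is_metric e' /\ complete_metric e' /\ same_topology e e'.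

Definition is_group {G : Type} (mul : G -> G -> G) (inv : G -> G) (one : G) : Prop :=
  (forall a b c, mul a (mul b c) = mul (mul a b) c) /\
  (forall a, mul one a = a) /\ (forall a, mul a one = a) /\
  (forall a, mul (inv a) a = one) /\ (forall a, mul a (inv a) = one).

Definition topological_group {G : Type} (d : G -> G -> R)
    (mul : G -> G -> G) (inv : G -> G) : Prop :=
  (forall a b eps, 0 < eps -> exists del, 0 < del /\
     forall a' b', d a a' < del -> d b b' < del -> d (mul a b) (mul a' b') < eps) /\
  (forall a eps, 0 < eps -> exists del, 0 < del /\
     forall a', d a a' < del -> d (inv a) (inv a') < eps).

Definition right_invariant {G : Type} (d : G -> G -> R) (mul : G -> G -> G) : Prop :=
  forall g0 g1 h, d (mul g0 h) (mul g1 h) = d g0 g1.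

Definition bounded_by_one {G : Type} (d : G -> G -> R) : Prop :=
  forall g h, d g h <= 1.

Definition subgroup {G : Type} (mul : G -> G -> G) (inv : G -> G) (one : G)
    (H : G -> Prop) : Prop :=
  H one /\ (forall a b, H a -> H b -> H (mul a b)) /\ (forall a, H a -> H (inv a)).

Definition continuous_action {G Y : Type} (d : G -> G -> R) (eY : Y -> Y -> R)
    (mul : G -> G -> G) (one : G) (act : G -> Y -> Y) : Prop :=
  (forall y, act one y = y) /\
  (forall g h y, act (mul g h) y = act g (act h y)) /\
  (forall g y eps, 0 < eps -> exists del, 0 < del /\
     forall g' y', d g g' < del -> eY y y' < del -> eY (act g y) (act g' y') < eps).

Definition qr (q : Qc) : R := Q2R (this q).
Definition natQ (n : nat) : Qc := Q2Qc (inject_Z (Z.of_nat n)).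
Definition Q0 : Qc := Q2Qc 0%Q.
Definition Q1 : Qc := Q2Qc 1%Q.

Definition qfamily (G : Type) := list Qc -> G -> R.

Definition lip1 {G : Type} (d : G -> G -> R) (f : G -> R) : Prop :=
  (forall g, 0 <= f g <= 1) /\ (forall g1 g2, Rabs (f g1 - f g2) <= d g1 g2).

Definition in_unit (q : Qc) : Prop := 0 < qr q < 1.

Definition in_X {G : Type} (d : G -> G -> R) (G0 : G -> Prop) (f : qfamily G) : Prop :=
  (forall s, lip1 d (f s)) /\
  (forall s g0 (m n : nat) q0 q1 q2 eps, G0 g0 ->
     in_unit q0 -> in_unit q1 -> in_unit q2 -> in_unit eps ->
     0 < qr q0 - qr eps < 1 -> 0 < qr q0 + qr eps < 1 ->
     0 < qr q1 - qr eps < 1 -> 0 < qr q1 + qr eps < 1 ->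
     0 < qr q2 - qr eps < 1 -> 0 < qr q2 + qr eps < 1 ->
     f (s ++ [q0; q1; q2; Q0; natQ m; natQ n]) g0 < qr q1 - qr eps \/
     f s g0 <= qr q0 + qr eps) /\
  (forall s g0 (m n : nat) q0 q1 q2 eps, G0 g0 ->
     in_unit q0 -> in_unit q1 -> in_unit q2 -> in_unit eps ->
     0 < qr q0 - qr eps < 1 -> 0 < qr q0 + qr eps < 1 ->
     0 < qr q1 - qr eps < 1 -> 0 < qr q1 + qr eps < 1 ->
     0 < qr q2 - qr eps < 1 -> 0 < qr q2 + qr eps < 1 ->
     f (s ++ [q0; q1; q2; Q1; natQ m; natQ n]) g0 >= qr q2 + qr eps \/
     f (s ++ [q0; q1; q2; Q0; natQ m; natQ n]) g0 >= qr q1 - qr eps) /\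
  (forall s g0 q0 eps, G0 g0 -> in_unit q0 -> in_unit eps ->
     f s g0 < qr q0 ->
     exists q1 q2 g1 (m n : nat),
       0 < qr q2 /\ qr q2 < qr q1 /\ qr q1 < qr q0 /\ qr q0 < 1 /\
       G0 g1 /\ d g0 g1 < qr eps /\
       f (s ++ [q0; q1; q2; Q1; natQ m; natQ n]) g1 < qr q2).

Definition fam_act {G : Type} (mul : G -> G -> G) (g : G) (f : qfamily G) : qfamily G :=
  fun s g0 => f s (mul g0 g).

(* the topology tau on X: generated by the subbasic sets
   {f in X : f_s(g0) < q0}, s a rational sequence, g0 in G0, q0 rational. *)
Definition subbasic_list {G : Type} (f : qfamily G) (l : list (list Qc * G * Qc)) : Prop :=
  forall s g0 q0, In (s, g0, q0) l -> f s g0 < qr q0.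

Definition tau_open {G : Type} (d : G -> G -> R) (G0 : G -> Prop)
    (O : qfamily G -> Prop) : Prop :=
  (forall f, O f -> in_X d G0 f) /\
  forall f, O f -> exists l : list (list Qc * G * Qc),
    (forall s g0 q0, In (s, g0, q0) l -> G0 g0) /\ subbasic_list f l /\
    forall f', in_X d G0 f' -> subbasic_list f' l -> O f'.

(* Main.v *)
Require Import Defs.
From Stdlib Require Import Reals QArith Qcanon List.
From Stdlib Require Import Reals QArith Qcanon Qreals List Cantor Lra Lia Classical ClassicalEpsilon FunctionalExtensionality.
Import ListNotations.
Open Scope R_scope.

Section Inf.
Variables (G : Type) (e : G -> R).
Hypothesis He : forall k, 0 <= e k.

Definition Eset (A : G -> Prop) : R -> Prop :=
  fun r => r = -1 \/ exists k, A k /\ r = - Rabs (e k).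
Lemma Ebound A : bound (Eset A).
Proof. exists 0. intros r [->|[k [_ ->]]]; [lra| pose proof (Rabs_pos (e k)); lra]. Qed.
Lemma Ene A : exists x, Eset A x.
Proof. exists (-1); left; auto. Qed.
Definition Finf A := - proj1_sig (completeness (Eset A) (Ebound A) (Ene A)).

Lemma Finf_spec A : is_lub (Eset A) (- Finf A).
Proof. unfold Finf. rewrite Ropp_involutive. apply proj2_sig. Qed.

Lemma Finf_le1 A : Finf A <= 1.
Proof. destruct (Finf_spec A) as [H1 _]. assert (-1 <= - Finf A) by (apply H1; left; auto). lra. Qed.
Lemma Finf_ge0 A : 0 <= Finf A.
Proof. destruct (Finf_spec A) as [_ H2]. assert (- Finf A <= 0); [|lra].
  apply H2. intros r [->|[k [_ ->]]]; [lra| pose proof (Rabs_pos (e k)); lra]. Qed.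
Lemma Finf_le A k : A k -> Finf A <= e k.
Proof. intro Hk. destruct (Finf_spec A) as [H1 _].
  assert (- Rabs (e k) <= - Finf A) by (apply H1; right; eauto).
  rewrite Rabs_pos_eq in H by apply He. lra. Qed.
Lemma Finf_ge A c : (forall k, A k -> c <= e k) -> c <= 1 -> c <= Finf A.
Proof. intros H Hc. destruct (Finf_spec A) as [_ H2].
  assert (- Finf A <= - c); [|lra]. apply H2.
  intros r [->|[k [Hk ->]]]; [lra|]. rewrite Rabs_pos_eq by apply He.
  specialize (H k Hk). lra. Qed.
Lemma Finf_lt A c : Finf A < c -> c <= 1 -> exists k, A k /\ e k < c.
Proof. intros H Hc. apply NNPP. intro Hn. 
  assert (c <= Finf A); [|lra]. apply Finf_ge; auto.
  intros k Hk. destruct (Rle_dec c (e k)) as [|Hl]; auto. exfalso; apply Hn; exists k; split; auto; lra. Qed.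
End Inf.
Definition split6 (l : list Qc) : option (list Qc * Qc * Qc * Qc * Qc * Qc * Qc) :=
  match rev l with
  | y :: x :: b :: q2 :: q1 :: q0 :: r => Some (rev r, q0, q1, q2, b, x, y)
  | _ => None end.

Lemma split6_app s a b c e f g : split6 (s ++ [a;b;c;e;f;g]) = Some (s,a,b,c,e,f,g).
Proof. unfold split6. rewrite rev_app_distr. simpl. rewrite rev_involutive. reflexivity. Qed.

Lemma split6_len l s a b c e f g : split6 l = Some (s,a,b,c,e,f,g) -> length l = (length s + 6)%nat.
Proof. unfold split6. intro H. rewrite <- (length_rev l).
  destruct (rev l) as [|y0 [|x0 [|b0 [|c0 [|d0 [|e0 r]]]]]]; try discriminate.
  inversion H; subst. simpl. rewrite length_rev. lia. Qed.

Lemma Q1_neq_Q0 : Q1 <> Q0.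
Proof. intro H. apply (f_equal this) in H. unfold Q1, Q0 in H. simpl in H. discriminate. Qed.

Definition toN (q : Qc) : nat := Z.to_nat (Qnum (this q)).
Lemma toN_natQ m : toN (natQ m) = m.
Proof. unfold toN, natQ. unfold Q2Qc. cbn [this]. rewrite Qred_identity. simpl. apply Znat.Nat2Z.id.
  simpl. apply Z.gcd_1_r. Qed.
Definition rad (a : nat) : R := / INR (S a).
Section Cons.
Variables (G Y : Type) (d : G -> G -> R) (one : G) (eY : Y -> Y -> R) (act : G -> Y -> Y)
  (fG : nat -> option G) (fY : nat -> option Y).

Definition Fd (V : Y -> Prop) (x : Y) : R := Finf G (fun k => d k one) (fun k => V (act k x)).
Definition Kset (i : nat) (r : R) (z : Y) : Prop := exists c, fY i = Some c /\ eY z c <= r.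
Definition Wset (i : nat) (r : R) (z : Y) : Prop := exists c, fY i = Some c /\ eY z c < r.
Definition dI x := fst (of_nat (toN x)).
Definition dC x := snd (of_nat (toN x)).
Definition dC2 y := fst (of_nat (toN y)).
Definition dA y := fst (of_nat (snd (of_nat (toN y)))).
Definition dB y := snd (of_nat (snd (of_nat (toN y)))).
Definition KK x y := Kset (dC x) (rad (dA y)).
Definition WW y := Wset (dC2 y) (rad (dB y)).
Definition valid (Vs : Y -> Prop) (q0 q1 q2 x y : Qc) : Prop :=
  match fG (dI x) with
  | Some j0 => d j0 one <= qr q0 /\ (forall z, KK x y z -> Vs z) /\
      (forall h w, d h one < qr q1 + qr q2 -> WW y w -> KK x y (act j0 (act h w)))
  | None => False end.
Definition tchild Vs q0 q1 q2 x y : Y -> Prop := fun z =>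
  match fG (dI x) with
  | Some j0 => valid Vs q0 q1 q2 x y -> ~ KK x y (act j0 z)
  | None => True end.
Definition uchild Vs q0 q1 q2 x y : Y -> Prop := fun z => valid Vs q0 q1 q2 x y /\ WW y z.
Definition base (l : list Qc) : Y -> Prop :=
  match l with [x] => Wset (fst (of_nat (toN x))) (rad (snd (of_nat (toN x)))) | _ => fun _ => False end.

Fixpoint Vaux (k : nat) (l : list Qc) : Y -> Prop :=
  match k with O => base l
  | S k' => match split6 l with
     | Some (s,q0,q1,q2,b,x,y) => if Qc_eq_dec b Q0 then tchild (Vaux k' s) q0 q1 q2 x y
          else if Qc_eq_dec b Q1 then uchild (Vaux k' s) q0 q1 q2 x y else base l
     | None => base l end end.

Lemma Vaux_fuel k : forall k' l, (length l <= k)%nat -> (length l <= k')%nat -> Vaux k l = Vaux k' l.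
Proof.
  induction k as [|k IH]; intros k' l H1 H2.
  - destruct l; [|simpl in H1; lia]. destruct k'; reflexivity.
  - destruct k' as [|k'].
    + destruct l; [|simpl in H2; lia]. reflexivity.
    + simpl. destruct (split6 l) as [[[[[[[s q0] q1] q2] b] x] y]|] eqn:E; auto.
      apply split6_len in E. rewrite (IH k' s) by lia. reflexivity.
Qed.

Definition Vof l := Vaux (length l) l.

Lemma Vof_t s q0 q1 q2 x y : Vof (s ++ [q0;q1;q2;Q0;x;y]) = tchild (Vof s) q0 q1 q2 x y.
Proof. unfold Vof. rewrite length_app. simpl. replace (length s + 6)%nat with (S (length s + 5)) by lia.
  simpl. rewrite split6_app. destruct (Qc_eq_dec Q0 Q0); [|congruence].
  rewrite (Vaux_fuel _ (length s)) by lia. reflexivity. Qed.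
Lemma Vof_u s q0 q1 q2 x y : Vof (s ++ [q0;q1;q2;Q1;x;y]) = uchild (Vof s) q0 q1 q2 x y.
Proof. unfold Vof. rewrite length_app. simpl. replace (length s + 6)%nat with (S (length s + 5)) by lia.
  simpl. rewrite split6_app. destruct (Qc_eq_dec Q1 Q0) as [e|]; [now destruct (Q1_neq_Q0 e)|].
  destruct (Qc_eq_dec Q1 Q1); [|congruence].
  rewrite (Vaux_fuel _ (length s)) by lia. reflexivity. Qed.
Lemma Vof_base x : Vof [x] = base [x].
Proof. reflexivity. Qed.
End Cons.
Lemma qr_Q2Qc q : qr (Q2Qc q) = Q2R q.
Proof. unfold qr. apply Qeq_eqR. apply Qred_correct. Qed.
Definition qinv (n : nat) : Qc := Q2Qc (Qmake 1 (Pos.of_succ_nat n)).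
Lemma qr_qinv n : qr (qinv n) = / INR (S n).
Proof. unfold qinv. rewrite qr_Q2Qc.
  unfold Q2R. cbn [Qnum Qden]. rewrite Znat.Zpos_P_of_succ_nat. rewrite <- Znat.Nat2Z.inj_succ.
  rewrite <- INR_IZR_INZ. lra. Qed.
Lemma INR_S_pos n : 0 < INR (S n).
Proof. apply lt_0_INR. lia. Qed.
Lemma inv_S_pos n : 0 < / INR (S n).
Proof. apply Rinv_0_lt_compat, INR_S_pos. Qed.
Lemma inv_S_le1 n : / INR (S n) <= 1.
Proof. rewrite <- Rinv_1. apply Rinv_le_contravar; [lra|]. rewrite S_INR. pose proof (pos_INR n). lra. Qed.
Lemma arch_inv r : 0 < r -> exists n, / INR (S n) < r.
Proof. intro Hr. destruct (archimed (/ r)) as [H1 _].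
  pose proof (Rinv_0_lt_compat _ Hr).
  assert (Hz : (0 <= up (/ r))%Z). { apply le_IZR. lra. }
  exists (Z.to_nat (up (/ r))).
  rewrite <- (Rinv_inv r) at 2. apply Rinv_lt_contravar.
  - apply Rmult_lt_0_compat; auto. apply INR_S_pos.
  - rewrite S_INR, INR_IZR_INZ, Znat.Z2Nat.id by auto. lra.
Qed.
Lemma qinv_lt n m : (n < m)%nat -> qr (qinv m) < qr (qinv n).
Proof. intro H. rewrite !qr_qinv. apply Rinv_lt_contravar.
  apply Rmult_lt_0_compat; apply INR_S_pos. apply lt_INR. lia. Qed.
Section Props.
Variables (G Y : Type) (mul : G -> G -> G) (inv : G -> G) (one : G) (d : G -> G -> R)
  (eY : Y -> Y -> R) (act : G -> Y -> Y) (fG : nat -> option G) (fY : nat -> option Y).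
Hypothesis Hgrp : is_group mul inv one.
Hypothesis Hd : is_metric d.
Hypothesis Hright : right_invariant d mul.
Hypothesis Htop : topological_group d mul inv.
Hypothesis HeY : is_metric eY.
Hypothesis Hact : continuous_action d eY mul one act.

Local Notation F := (Fd G Y d one act).

Lemma dpos a b : 0 <= d a b. Proof. destruct Hd as [H _]; apply H. Qed.
Lemma dxx a : d a a = 0. Proof. destruct Hd as [_ [H _]]; apply H. Qed.
Lemma dsym a b : d a b = d b a. Proof. destruct Hd as [_ [_ [_ [H _]]]]; apply H. Qed.
Lemma dtri a b c : d a c <= d a b + d b c. Proof. destruct Hd as [_ [_ [_ [_ H]]]]; apply H. Qed.
Lemma epos a b : 0 <= eY a b. Proof. destruct HeY as [H _]; apply H. Qed.
Lemma exx a : eY a a = 0. Proof. destruct HeY as [_ [H _]]; apply H. Qed.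
Lemma eeq a b : eY a b = 0 -> a = b. Proof. destruct HeY as [_ [_ [H _]]]; apply H. Qed.
Lemma esym a b : eY a b = eY b a. Proof. destruct HeY as [_ [_ [_ [H _]]]]; apply H. Qed.
Lemma etri a b c : eY a c <= eY a b + eY b c. Proof. destruct HeY as [_ [_ [_ [_ H]]]]; apply H. Qed.
Lemma act_one y : act one y = y. Proof. destruct Hact as [H _]; apply H. Qed.
Lemma act_mul g h y : act (mul g h) y = act g (act h y). Proof. destruct Hact as [_ [H _]]; apply H. Qed.
Lemma act_cont g y eps : 0 < eps -> exists del, 0 < del /\
  forall g' y', d g g' < del -> eY y y' < del -> eY (act g y) (act g' y') < eps.
Proof. destruct Hact as [_ [_ H]]; apply H. Qed.
Lemma mul_assoc a b c : mul a (mul b c) = mul (mul a b) c. Proof. destruct Hgrp as [H _]; apply H. Qed.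
Lemma mul_1l a : mul one a = a. Proof. destruct Hgrp as [_ [H _]]; apply H. Qed.
Lemma mul_1r a : mul a one = a. Proof. destruct Hgrp as [_ [_ [H _]]]; apply H. Qed.
Lemma mul_Vl a : mul (inv a) a = one. Proof. destruct Hgrp as [_ [_ [_ [H _]]]]; apply H. Qed.
Lemma mul_Vr a : mul a (inv a) = one. Proof. destruct Hgrp as [_ [_ [_ [_ H]]]]; apply H. Qed.

Lemma d_shift k g : d (mul k g) g = d k one.
Proof. rewrite <- (Hright k one g), mul_1l. reflexivity. Qed.

Lemma F_le V x k : V (act k x) -> F V x <= d k one.
Proof. apply (Finf_le G (fun k => d k one) (fun k => dpos k one) (fun k => V (act k x))). Qed.
Lemma F_lt V x c : F V x < c -> c <= 1 -> exists k, V (act k x) /\ d k one < c.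
Proof. apply (Finf_lt G (fun k => d k one) (fun k => dpos k one) (fun k => V (act k x))). Qed.
Lemma F_ge V x c : (forall k, V (act k x) -> c <= d k one) -> c <= 1 -> c <= F V x.
Proof. apply (Finf_ge G (fun k => d k one) (fun k => dpos k one) (fun k => V (act k x))). Qed.
Lemma F_ge0 V x : 0 <= F V x.
Proof. apply (Finf_ge0 G (fun k => d k one) (fun k => V (act k x))). Qed.
Lemma F_le1 V x : F V x <= 1.
Proof. apply Finf_le1. Qed.

Lemma F_lip V y g1 g2 : F V (act g1 y) <= F V (act g2 y) + d g1 g2.
Proof.
  cut (F V (act g1 y) - d g1 g2 <= F V (act g2 y)); [lra|].
  apply F_ge.
  - intros k Hk. set (k' := mul (mul k g2) (inv g1)).
    assert (Hk' : mul k' g1 = mul k g2).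
    { unfold k'. rewrite <- mul_assoc, mul_Vl, mul_1r. reflexivity. }
    assert (H1 : F V (act g1 y) <= d k' one).
    { apply F_le. rewrite <- act_mul, Hk', act_mul. exact Hk. }
    assert (H2 : d k' one = d (mul k g2) g1).
    { rewrite <- (Hright k' one g1), mul_1l, Hk'. reflexivity. }
    pose proof (dtri (mul k g2) g2 g1). rewrite d_shift in H. rewrite (dsym g2 g1) in H. lra.
  - pose proof (F_le1 V (act g1 y)). pose proof (dpos g1 g2). lra.
Qed.
Local Notation V := (Vof G Y d one eY act fG fY).
Local Notation TC := (tchild G Y d one eY act fG fY).
Local Notation UC := (uchild G Y d one eY act fG fY).
Local Notation KK' := (KK Y eY fY).
Local Notation WW' := (WW Y eY fY).

Lemma F_usc U g0 y q : metric_open eY U -> F U (act g0 y) < q ->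
  exists r, 0 < r /\ forall y', eY y y' < r -> F U (act g0 y') < q.
Proof.
  intros HU Hq. destruct (Rle_dec q 1) as [Hq1|Hq1].
  - destruct (F_lt _ _ _ Hq Hq1) as [k [Hk Hdk]].
    destruct (HU _ Hk) as [rho [Hrho Hball]].
    destruct (act_cont (mul k g0) y rho Hrho) as [del [Hdel Hc]].
    exists del; split; auto. intros y' Hy'.
    eapply Rle_lt_trans; [|exact Hdk]. apply F_le.
    rewrite <- act_mul. apply Hball. rewrite act_mul.
    rewrite <- !act_mul. apply Hc; auto. rewrite dxx; auto.
  - exists 1; split; [lra|]. intros. pose proof (F_le1 U (act g0 y')). lra.
Qed.

Lemma Wset_open i r : metric_open eY (Wset Y eY fY i r).
Proof. intros z [c [Hc Hz]]. exists (r - eY z c). split; [lra|].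
  intros y Hy. exists c; split; auto. pose proof (etri y z c). rewrite (esym y z) in H. lra. Qed.

Lemma base_open l : metric_open eY (base Y eY fY l).
Proof. destruct l as [|x [|]]; simpl; [intros z []| apply Wset_open| intros z []]. Qed.

Lemma tchild_open Vs q0 q1 q2 x y : metric_open eY (TC Vs q0 q1 q2 x y).
Proof.
  unfold tchild. destruct (fG (dI x)) as [j0|]; [|intros z _; exists 1; split; [lra|auto]].
  destruct (classic (valid G Y d one eY act fG fY Vs q0 q1 q2 x y)) as [Hv|Hv].
  - intros z Hz. specialize (Hz Hv). unfold KK, Kset in Hz.
    destruct (fY (dC x)) as [c|] eqn:Ec.
    + assert (Hgt : rad (dA y) < eY (act j0 z) c).
      { destruct (Rlt_dec (rad (dA y)) (eY (act j0 z) c)); auto. exfalso; apply Hz. exists c; split; auto; lra. }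
      destruct (act_cont j0 z (eY (act j0 z) c - rad (dA y))) as [del [Hdel Hc]]; [lra|].
      exists del; split; auto. intros z' Hz' _ [c' [Ec' Hle]]. rewrite Ec in Ec'. inversion Ec'; subst c'.
      assert (eY (act j0 z) (act j0 z') < eY (act j0 z) c - rad (dA y)) by (apply Hc; auto; rewrite dxx; auto).
      pose proof (etri (act j0 z) (act j0 z') c). lra.
    + exists 1; split; [lra|]. intros z' _ _ [c' [E _]]. rewrite Ec in E. discriminate.
  - intros z _. exists 1; split; [lra|]. intros y' _ Hv'. contradiction.
Qed.

Lemma uchild_open Vs q0 q1 q2 x y : metric_open eY (UC Vs q0 q1 q2 x y).
Proof.
  intros z [Hv Hz]. destruct (Wset_open _ _ z Hz) as [r [Hr Hb]]. exists r; split; auto.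
  intros y' Hy'. split; auto. apply Hb; auto.
Qed.

Lemma Vof_open l : metric_open eY (V l).
Proof.
  unfold Vof. destruct (length l) as [|k]; simpl; [apply base_open|].
  destruct (split6 l) as [[[[[[[s q0] q1] q2] b] x] y]|]; [|apply base_open].
  destruct (Qc_eq_dec b Q0); [apply tchild_open|].
  destruct (Qc_eq_dec b Q1); [apply uchild_open|apply base_open].
Qed.

Lemma cond1 Vs q0 q1 q2 x y eps z : 0 < eps -> 0 < qr q1 - eps ->
  F (TC Vs q0 q1 q2 x y) z < qr q1 - eps \/ F Vs z <= qr q0 + eps.
Proof.
  intros He H1. destruct (Rle_dec (F Vs z) (qr q0 + eps)) as [|Hgt]; [right; auto|left].
  eapply Rle_lt_trans; [|exact H1]. rewrite <- (dxx one). apply F_le. rewrite act_one.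
  unfold tchild, valid. destruct (fG (dI x)) as [j0|]; auto.
  intros [Hj [HK _]] HKz. pose proof (F_le Vs z j0 (HK _ HKz)). apply Rnot_le_lt in Hgt. lra.
Qed.

Lemma cond2 Vs q0 q1 q2 x y eps z : qr q2 + eps <= 1 -> qr q1 - eps <= 1 ->
  F (UC Vs q0 q1 q2 x y) z >= qr q2 + eps \/ F (TC Vs q0 q1 q2 x y) z >= qr q1 - eps.
Proof.
  intros H2 H1.
  destruct (Rle_dec (qr q2 + eps) (F (UC Vs q0 q1 q2 x y) z)) as [|Hu]; [left; lra|].
  destruct (Rle_dec (qr q1 - eps) (F (TC Vs q0 q1 q2 x y) z)) as [|Ht]; [right; lra|].
  exfalso. apply Rnot_le_lt in Hu, Ht.
  destruct (F_lt _ _ _ Hu H2) as [h' [[Hv HW] Hh']].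
  destruct (F_lt _ _ _ Ht H1) as [k [Hk Hdk]].
  unfold tchild in Hk. unfold valid in Hv, Hk.
  destruct (fG (dI x)) as [j0|]; [|contradiction].
  specialize (Hk Hv). destruct Hv as [_ [_ Hv]]. apply Hk.
  set (h := mul k (inv h')).
  assert (Hhh : mul h h' = k) by (unfold h; rewrite <- mul_assoc, mul_Vl, mul_1r; auto).
  replace (act k z) with (act h (act h' z)) by (rewrite <- act_mul, Hhh; auto).
  apply Hv; auto.
  assert (d h one = d k h') by (rewrite <- (Hright h one h'), mul_1l, Hhh; auto).
  pose proof (dtri k one h'). rewrite (dsym one h') in H0. lra.
Qed.

Lemma dec_I i ci : dI (natQ (to_nat (i, ci))) = i.
Proof. unfold dI. rewrite toN_natQ, cancel_of_to. reflexivity. Qed.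
Lemma dec_C i ci : dC (natQ (to_nat (i, ci))) = ci.
Proof. unfold dC. rewrite toN_natQ, cancel_of_to. reflexivity. Qed.
Lemma dec_C2 i a b : dC2 (natQ (to_nat (i, to_nat (a, b)))) = i.
Proof. unfold dC2. rewrite toN_natQ, cancel_of_to. reflexivity. Qed.
Lemma dec_A i a b : dA (natQ (to_nat (i, to_nat (a, b)))) = a.
Proof. unfold dA. rewrite toN_natQ, cancel_of_to. cbn [snd]. rewrite cancel_of_to. reflexivity. Qed.
Lemma dec_B i a b : dB (natQ (to_nat (i, to_nat (a, b)))) = b.
Proof. unfold dB. rewrite toN_natQ, cancel_of_to. cbn [snd]. rewrite cancel_of_to. reflexivity. Qed.

Lemma cond3 (HGd : forall g r, 0 < r -> exists i a, fG i = Some a /\ d g a < r)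
  (HYd : forall y r, 0 < r -> exists i c, fY i = Some c /\ eY y c < r)
  Vs q0 z : metric_open eY Vs -> 0 < qr q0 < 1 -> F Vs z < qr q0 ->
  exists q1 q2 m n, 0 < qr q2 /\ qr q2 < qr q1 /\ qr q1 < qr q0 /\
    F (UC Vs q0 q1 q2 (natQ m) (natQ n)) z < qr q2.
Proof.
  intros HVs Hq0 Hz.
  destruct (F_lt _ _ _ Hz (Rlt_le _ _ (proj2 Hq0))) as [k [Hk Hdk]].
  destruct (HVs _ Hk) as [eta [Heta Hball]].
  destruct (act_cont k z (eta/4)) as [del [Hdel Hc]]; [lra|].
  destruct (HGd k (Rmin del (qr q0 - d k one))) as [i [j0 [Hi Hj0]]]; [apply Rmin_glb_lt; lra|].
  pose proof (Rmin_l del (qr q0 - d k one)). pose proof (Rmin_r del (qr q0 - d k one)).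
  set (p := act j0 z).
  assert (Hkp : eY (act k z) p < eta/4) by (apply Hc; [lra|rewrite exx; lra]).
  destruct (arch_inv (eta/4)) as [a Ha]; [lra|].
  pose proof (inv_S_pos a) as Hrho. set (rho := / INR (S a)) in *.
  destruct (HYd p (rho/2)) as [ci [c [Hci Hpc]]]; [lra|].
  destruct (act_cont one p (rho/2)) as [del1 [Hdel1 Hc1]]; [lra|].
  destruct Htop as [Hmul _]. destruct (Hmul j0 one del1 Hdel1) as [del0 [Hdel0 Hm]].
  destruct (act_cont j0 z del1 Hdel1) as [del2 [Hdel2 Hc2]].
  destruct (arch_inv (del2/2)) as [b Hb]; [lra|].
  pose proof (inv_S_pos b) as Hrb. set (rb := / INR (S b)) in *.
  destruct (HYd z rb) as [ci2 [c2 [Hci2 Hzc2]]]; [lra|].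
  destruct (arch_inv (Rmin (qr q0) (del0/2))) as [e He]; [apply Rmin_glb_lt; lra|].
  pose proof (Rmin_l (qr q0) (del0/2)). pose proof (Rmin_r (qr q0) (del0/2)).
  assert (Hq21 : qr (qinv (S (2*e))) < qr (qinv e)) by (apply qinv_lt; lia).
  assert (Hq2p : 0 < qr (qinv (S (2*e)))) by (rewrite qr_qinv; apply inv_S_pos).
  rewrite <- qr_qinv in He.
  exists (qinv e), (qinv (S (2*e))), (to_nat (i,ci)), (to_nat (ci2, to_nat (a,b))).
  split; [auto|split; [auto|split; [lra|]]].
  eapply Rle_lt_trans with (d one one); [apply F_le| rewrite dxx; lra].
  rewrite act_one. unfold uchild. split.
  - unfold valid. rewrite dec_I, Hi. split; [|split].
    + pose proof (dtri j0 k one). rewrite (dsym j0 k) in H3. lra.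
    + intros w [c' [E Hw]]. rewrite dec_C, Hci in E. rewrite dec_A in Hw. inversion E; subst c'.
      apply Hball. pose proof (etri (act k z) p w). pose proof (etri p c w).
      unfold rad in Hw; fold rho in Hw. pose proof (esym c w). lra.
    + intros h w Hh [c' [E Hw]]. rewrite dec_C2, Hci2 in E. rewrite dec_B in Hw. inversion E; subst c'.
      unfold KK, Kset. rewrite dec_C, dec_A. exists c; split; auto.
      set (c' := mul (mul j0 h) (inv j0)).
      assert (Hcj : mul c' j0 = mul j0 h) by (unfold c'; rewrite <- mul_assoc, mul_Vl, mul_1r; auto).
      replace (act j0 (act h w)) with (act c' (act j0 w)) by (rewrite <- !act_mul, Hcj; auto).
      assert (Hdc : d one c' < del1).
      { rewrite <- (Hright one c' j0), mul_1l, Hcj. rewrite <- (mul_1r j0) at 1.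
        apply Hm; [rewrite dxx; lra| rewrite dsym; lra]. }
      assert (Hzw : eY z w < del2).
      { pose proof (etri z c2 w) as T1. rewrite (esym c2 w) in T1. unfold rad in Hw; fold rb in Hw. lra. }
      assert (Hpw : eY p (act j0 w) < del1) by (apply Hc2; auto; rewrite dxx; lra).
      specialize (Hc1 c' (act j0 w) Hdc Hpw). rewrite act_one in Hc1.
      pose proof (etri (act c' (act j0 w)) p c) as T2. rewrite (esym _ p) in T2. unfold rad; fold rho. lra.
  - unfold WW, Wset. rewrite dec_C2, dec_B. exists c2; split; auto.
Qed.

Definition piF (y : Y) : qfamily G := fun s g0 => F (V s) (act g0 y).

Section WithDense.
Hypothesis HGd : forall g r, 0 < r -> exists i a, fG i = Some a /\ d g a < r.
Hypothesis HYd : forall y r, 0 < r -> exists i c, fY i = Some c /\ eY y c < r.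
Variable G0 : G -> Prop.
Hypothesis HG1 : G0 one.

Lemma piX y : in_X d G0 (piF y).
Proof.
  unfold in_X, piF. split; [|split; [|split]].
  - intro s. split; [intro g; split; [apply F_ge0|apply F_le1]|].
    intros g1 g2. apply Rabs_le. pose proof (F_lip (V s) y g1 g2). pose proof (F_lip (V s) y g2 g1).
    rewrite (dsym g2 g1) in H0. lra.
  - intros s g0 m n q0 q1 q2 eps _ _ _ _ He _ _ H1 _ _ _. rewrite Vof_t.
    apply cond1; unfold in_unit in He; lra.
  - intros s g0 m n q0 q1 q2 eps _ _ _ _ He _ _ H1 _ _ H2. rewrite Vof_u, Vof_t.
    apply cond2; lra.
  - intros s g0 q0 eps HG Hq0 He Hlt.
    destruct (cond3 HGd HYd (V s) q0 (act g0 y) (Vof_open s) Hq0 Hlt) as [q1 [q2 [m [n [A1 [A2 [A3 A4]]]]]]].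
    exists q1, q2, g0, m, n. rewrite Vof_u. unfold in_unit in *. rewrite dxx.
    repeat split; auto; lra.
Qed.

Lemma sub_usc y l : subbasic_list (piF y) l ->
  exists r, 0 < r /\ forall y', eY y y' < r -> subbasic_list (piF y') l.
Proof.
  induction l as [|[[s g0] q] l IH]; intro H.
  - exists 1; split; [lra|]. intros y' _ s g0 q0 [].
  - assert (H1 : piF y s g0 < qr q) by (apply H; left; auto).
    assert (H2 : subbasic_list (piF y) l) by (intros s' g' q' Hin; apply H; right; auto).
    destruct (F_usc (V s) g0 y (qr q) (Vof_open s) H1) as [r1 [Hr1 Hc1]].
    destruct (IH H2) as [r2 [Hr2 Hc2]].
    exists (Rmin r1 r2); split; [apply Rmin_glb_lt; auto|].
    intros y' Hy' s' g' q' [E|Hin].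
    + inversion E; subst. apply Hc1. pose proof (Rmin_l r1 r2). lra.
    + apply (Hc2 y'); auto. pose proof (Rmin_r r1 r2). lra.
Qed.

Lemma pi_cont O : tau_open d G0 O -> metric_open eY (fun y => O (piF y)).
Proof.
  intros [HOX HO] y Hy. destruct (HO _ Hy) as [l [Hl0 [Hsub Hall]]].
  destruct (sub_usc y l Hsub) as [r [Hr Hc]]. exists r; split; auto.
  intros y' Hy'. apply Hall; [apply piX|apply Hc; auto].
Qed.

Lemma pi_open U : metric_open eY U -> exists O, tau_open d G0 O /\ forall y, U y <-> O (piF y).
Proof.
  intros HU.
  exists (fun f => in_X d G0 f /\ exists l, (forall s g0 q0, In (s,g0,q0) l -> G0 g0) /\
            subbasic_list f l /\ forall y', subbasic_list (piF y') l -> U y').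
  split.
  - split; [intros f [H _]; auto|].
    intros f [HX [l [H1 [H2 H3]]]]. exists l. split; auto. split; auto.
    intros f' HX' Hs. split; auto. exists l; auto.
  - intro y. split.
    + intro Hy. split; [apply piX|].
      destruct (HU y Hy) as [rho [Hrho Hball]].
      destruct (act_cont one y rho Hrho) as [del [Hdel Hc]].
      destruct (arch_inv (del/2)) as [a Ha]; [lra|].
      destruct (HYd y (rad a)) as [ci [c [Hci Hyc]]]; [apply inv_S_pos|].
      destruct (arch_inv del Hdel) as [e He].
      assert (Hb : forall z, Vof G Y d one eY act fG fY [natQ (to_nat (ci, a))] z <-> eY z c < rad a).
      { intro z. rewrite Vof_base. unfold base, Wset. cbv beta iota. rewrite toN_natQ, cancel_of_to. cbn [fst snd].
        split; [intros [c' [E Hz]]; rewrite Hci in E; inversion E; subst; auto|intro; exists c; auto]. }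
      exists [([natQ (to_nat (ci, a))], one, qinv e)]. split; [|split].
      * intros s g0 q0 [E|[]]. inversion E; subst; auto.
      * intros s g0 q0 [E|[]]. inversion E; subst. unfold piF.
        eapply Rle_lt_trans with (d one one); [apply F_le|rewrite dxx, qr_qinv; apply inv_S_pos].
        apply Hb. rewrite !act_one. auto.
      * intros y' Hs. assert (H1 : piF y' [natQ (to_nat (ci, a))] one < qr (qinv e)) by (apply Hs; left; auto).
        unfold piF in H1. rewrite act_one in H1.
        assert (Hq1 : qr (qinv e) <= 1) by (rewrite qr_qinv; apply inv_S_le1).
        destruct (F_lt _ _ _ H1 Hq1) as [k [Hk Hdk]]. apply Hb in Hk.
        rewrite qr_qinv in Hdk.
        apply Hball.
        assert (Hdi : d one (inv k) = d k one).
        { rewrite <- (Hright one (inv k) k), mul_1l, mul_Vl. auto. }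
        assert (Hu : eY y (act k y') < del).
        { pose proof (etri y c (act k y')). rewrite (esym c) in H. unfold rad in *. lra. }
        specialize (Hc (inv k) (act k y') ltac:(lra) Hu).
        rewrite <- act_mul, mul_Vl, !act_one in Hc. auto.
    + intros [_ [l [_ [Hs Hall]]]]. apply Hall; auto.
Qed.
End WithDense.
End Props.

Theorem lemma2p13
  (G : Type) (mul : G -> G -> G) (inv : G -> G) (one : G)
  (d : G -> G -> R) (G0 : G -> Prop)
  (Hgrp : is_group mul inv one)
  (Hd : is_metric d) (Hpolish : polish_topology d)
  (Htop : topological_group d mul inv)
  (Hright : right_invariant d mul) (Hbd : bounded_by_one d)
  (HG0sub : subgroup mul inv one G0) (HG0count : countable_set G0)
  (HG0dense : dense_set d G0)
  (Y : Type) (eY : Y -> Y -> R) (HY : polish_topology eY)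
  (act : G -> Y -> Y) (Hact : continuous_action d eY mul one act) :
  exists pi : Y -> qfamily G,
    (forall y, in_X d G0 (pi y)) /\
    (forall O, tau_open d G0 O -> metric_open eY (fun y => O (pi y))) /\
    (forall y1 y2, pi y1 = pi y2 -> y1 = y2) /\
    (forall g y, pi (act g y) = fam_act mul g (pi y)) /\
    (forall U, metric_open eY U ->
       exists O, tau_open d G0 O /\ forall y, U y <-> O (pi y)).
Proof.
  destruct HG0count as [fG HfG].
  destruct HY as [HeY [[A [[fY HfY] HAd]] _]].
  assert (HGd : forall g r, 0 < r -> exists i a, fG i = Some a /\ d g a < r).
  { intros g r Hr. destruct (HG0dense g r Hr) as [a [Ha Hga]].
    destruct (HfG a Ha) as [i Hi]. exists i, a; auto. }
  assert (HYd : forall y r, 0 < r -> exists i c, fY i = Some c /\ eY y c < r).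
  { intros y r Hr. destruct (HAd y r Hr) as [a [Ha Hya]].
    destruct (HfY a Ha) as [i Hi]. exists i, a; auto. }
  assert (HG1 : G0 one) by (destruct HG0sub; auto).
  exists (piF G Y one d eY act fG fY).
  split; [|split; [|split; [|split]]].
  - intro y. eapply piX; eauto.
  - intros O HO. eapply pi_cont; eauto.
  - intros y1 y2 E. apply NNPP. intro Hne.
    set (U := fun y => eY y1 y < eY y1 y2).
    assert (HU : metric_open eY U).
    { intros z Hz. exists (eY y1 y2 - eY y1 z). split; [unfold U in Hz; lra|].
      intros w Hw. unfold U. pose proof (etri _ _ HeY y1 z w). lra. }
    destruct (pi_open G Y mul inv one d eY act fG fY Hgrp Hd Hright Htop HeY Hact HGd HYd G0 HG1 U HU) as [O [_ HO]].
    assert (Hpos : 0 < eY y1 y2).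
    { destruct (epos _ _ HeY y1 y2) as [|E0]; auto. symmetry in E0. apply (eeq _ _ HeY) in E0. contradiction. }
    assert (U y1) by (unfold U; rewrite (exx _ _ HeY); auto).
    apply HO in H. rewrite E in H. apply HO in H. unfold U in H. lra.
  - intros g y. unfold fam_act, piF. apply functional_extensionality; intro s.
    apply functional_extensionality; intro g0. rewrite (act_mul _ _ _ _ _ _ _ Hact). reflexivity.
  - intros U HU. eapply pi_open; eauto.
Qed.
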